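(* Uniformly in any linear ordering $R=(A,<_R)$ (with $A\subseteq\mathbb{N}$), one may compute a tree $T_R\subseteq2^{<\omega}$ and a labeling function $l_R:A\to T_R$ such that: (1) for each $\sigma\in T_R$, the last bit of $\sigma$ is $0$ if and only if $\sigma=l_R(a)$ for some $a\in A$; (2) for each $a\in A$, $l_R(a)^\frown\overline1\in[T_R]$; (3) for each $a,b\in A$, $a<_R b$ if and only if $l_R(a)^\frown\overline1<l_R(b)^\frown\overline1$; (4) if $X\in[T_R]$, then $X=l_R(a)^\frown\overline1$ for some $a\in A$ if and only if $X$ has a successor (an immediate successor in the order) in $[T_R]$; (5) the order type of $[T_R]$ depends only on the order type of $R$; (6) two linear orders $R$ and $S$ are isomorphic if and only if $[T_R]$ and $[T_S]$ are order isomorphic.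
   Context: A tree is a subset of $2^{<\omega}$ (finite binary strings) closed under initial segments; $[T]$ is the set of $X\in2^\omega$ all of whose finite initial segments lie in $T$, ordered lexicographically: $X<Y$ iff $X\neq Y$ and $X(n)<Y(n)$ at the first $n$ where they differ. For a finite string $\sigma$, $\sigma^\frown\overline1$ is the infinite sequence consisting of $\sigma$ followed by all $1$'s. A linear ordering $R=(A,<_R)$ is given by its code $\{\langle a,b\rangle: a,b\in A,\ a<_R b\}\subseteq\mathbb{N}$; ''uniformly compute'' means a single oracle algorithm computes (the codes of) $T_R$ and $l_R$ from the code of $R$. *)

(* Defs.v *)
From mathcomp Require Import all_boot.
Set Implicit Arguments. Unset Strict Implicit. Unset Printing Implicit Defensive.

Inductive rf : Type :=
| rf_zero : rf
| rf_succ : rf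
| rf_proj : nat -> rf
| rf_oracle : rf
| rf_comp : rf -> seq rf -> rf
| rf_prec : rf -> rf -> rf
| rf_mu : rf -> rf.

Inductive eval (o : nat -> bool) : rf -> seq nat -> nat -> Prop :=
| ev_zero xs : eval o rf_zero xs 0
| ev_succ x xs : eval o rf_succ (x :: xs) x.+1
| ev_proj i xs : i < size xs -> eval o (rf_proj i) xs (nth 0 xs i)
| ev_oracle x xs : eval o rf_oracle (x :: xs) (nat_of_bool (o x))
| ev_comp f gs xs ys y :
    evals o gs xs ys -> eval o f ys y -> eval o (rf_comp f gs) xs y
| ev_prec0 g h xs y : eval o g xs y -> eval o (rf_prec g h) (0 :: xs) y
| ev_precS g h n xs z y :
    eval o (rf_prec g h) (n :: xs) z -> eval o h (n :: z :: xs) y ->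
    eval o (rf_prec g h) (n.+1 :: xs) y
| ev_mu f xs n :
    eval o f (n :: xs) 0 ->
    (forall m, m < n -> exists k, eval o f (m :: xs) k.+1) ->
    eval o (rf_mu f) xs n
with evals (o : nat -> bool) : seq rf -> seq nat -> seq nat -> Prop :=
| evs_nil xs : evals o [::] xs [::]
| evs_cons g gs xs y ys :
    eval o g xs y -> evals o gs xs ys -> evals o (g :: gs) xs (y :: ys).

Definition cpair (a b : nat) : nat := 'C(a + b + 1, 2) + b.

(* Bijective coding of finite binary strings by natural numbers. *)
Fixpoint code_str (s : seq bool) : nat :=
  match s with
  | [::] => 0
  | b :: s' => (code_str s').*2 + (1 + nat_of_bool b)
  end.

(* o is the oracle presenting the linear ordering R = (A, lt): the even queries
   give A, the odd queries give the code {<a,b> : a,b in A, a <_R b}. *)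
Definition presents (o : nat -> bool) (A : pred nat) (lt : rel nat) : Prop :=
  (forall n, o n.*2 = A n) /\
  (forall a b, o (cpair a b).*2.+1 = [&& A a, A b & lt a b]).

Definition linear_order (A : pred nat) (lt : rel nat) : Prop :=
  (forall a, A a -> ~~ lt a a) /\
  (forall a b c, A a -> A b -> A c -> lt a b -> lt b c -> lt a c) /\
  (forall a b, A a -> A b -> a != b -> lt a b || lt b a).

Definition is_tree (T : seq bool -> Prop) : Prop :=
  forall s n, T s -> T (take n s).

Definition body (T : seq bool -> Prop) (X : nat -> bool) : Prop :=
  forall n, T (mkseq X n).

Definition lexlt (X Y : nat -> bool) : Prop :=
  exists n, (forall m, m < n -> X m = Y m) /\ X n = false /\ Y n = true.

Definition ext1 (s : seq bool) : nat -> bool :=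
  fun n => if n < size s then nth false s n else true.

Definition has_successor_in (P : (nat -> bool) -> Prop) (X : nat -> bool) : Prop :=
  exists Y, P Y /\ lexlt X Y /\ ~ (exists Z, P Z /\ lexlt X Z /\ lexlt Z Y).

Definition order_iso {U V : Type} (P : U -> Prop) (ltP : U -> U -> Prop)
    (Q : V -> Prop) (ltQ : V -> V -> Prop) : Prop :=
  exists f : U -> V,
    (forall x, P x -> Q (f x)) /\
    (forall y, Q y -> exists x, P x /\ f x = y) /\
    (forall x y, P x -> P y -> (ltP x y <-> ltQ (f x) (f y))).

Definition lin_iso (A : pred nat) (lt : rel nat) (B : pred nat) (lt' : rel nat) :=
  order_iso (fun a => A a) (fun a b => lt a b) (fun b => B b) (fun a b => lt' a b).

Definition tree_of (eT : rf) (o : nat -> bool) : seq bool -> Prop :=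
  fun s => eval o eT [:: code_str s] 1.

(* Main.v *)
From Stdlib Require Import ClassicalEpsilon FunctionalExtensionality Classical.
Require Import Defs.
From mathcomp Require Import all_boot zify.
Set Implicit Arguments. Unset Strict Implicit. Unset Printing Implicit Defensive.


Fixpoint run (o : nat -> bool) (e : rf) (xs : seq nat) {struct e} : nat :=
  match e with
  | rf_zero => 0
  | rf_succ => (head 0 xs).+1
  | rf_proj i => nth 0 xs i
  | rf_oracle => nat_of_bool (o (head 0 xs))
  | rf_comp f gs => run o f (map (fun g => run o g xs) gs)
  | rf_prec g h => match xs with
      | [::] => 0
      | n :: xs' => nat_rect (fun _ => nat) (run o g xs')
                      (fun k z => run o h [:: k, z & xs']) n end
  | rf_mu _ => 0
  end.

Fixpoint wf (n : nat) (e : rf) {struct e} : bool :=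
  match e with
  | rf_zero => true
  | rf_succ => 0 < n
  | rf_proj i => i < n
  | rf_oracle => 0 < n
  | rf_comp f gs => all (fun g => wf n g) gs && wf (size gs) f
  | rf_prec g h => [&& 0 < n, wf n.-1 g & wf n.+1 h]
  | rf_mu _ => false
  end.

Fixpoint allPr (P : rf -> Prop) (gs : seq rf) : Prop :=
  match gs with [::] => True | g :: gs' => P g /\ allPr P gs' end.

Section Ind.
Variable P : rf -> Prop.
Hypothesis H0 : P rf_zero.
Hypothesis H1 : P rf_succ.
Hypothesis H2 : forall i, P (rf_proj i).
Hypothesis H3 : P rf_oracle.
Hypothesis H4 : forall f gs, P f -> allPr P gs -> P (rf_comp f gs).
Hypothesis H5 : forall g h, P g -> P h -> P (rf_prec g h).
Hypothesis H6 : forall f, P f -> P (rf_mu f).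
Fixpoint rf_ind2 (e : rf) : P e :=
  match e with
  | rf_zero => H0
  | rf_succ => H1
  | rf_proj i => H2 i
  | rf_oracle => H3
  | rf_comp f gs => H4 (rf_ind2 f)
      ((fix aux (gs : seq rf) : allPr P gs :=
          match gs with [::] => I | g :: gs' => conj (rf_ind2 g) (aux gs') end) gs)
  | rf_prec g h => H5 (rf_ind2 g) (rf_ind2 h)
  | rf_mu f => H6 (rf_ind2 f)
  end.
End Ind.

Lemma run_sound o e : forall xs, wf (size xs) e -> eval o e xs (run o e xs).
Proof.
elim/rf_ind2: e => [|||| f gs IHf IHgs | g h IHg IHh | f IHf] xs /=.
- by move=> _; constructor.
- by case: xs => // x xs _; constructor.
- by move=> Hi; constructor.
- by case: xs => // x xs _; constructor.
- case/andP=> Hgs Hf; apply: ev_comp; last by apply: IHf; rewrite size_map.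
  elim: gs IHgs Hgs {Hf} => [|g gs IH] /=; first by move=> _ _; constructor.
  by case=> IHg IHgs /andP[Hg Hgs]; constructor; [apply: IHg | apply: IH].
- case: xs => [|n xs] //= /andP[Hg Hh].
  elim: n => [|n IHn] /=; first by constructor; apply: IHg.
  by apply: ev_precS; [apply: IHn | apply: IHh].
- by [].
Qed.

Scheme eval_mut := Induction for eval Sort Prop with evals_mut := Induction for evals Sort Prop.

Lemma eval_run o e xs y : eval o e xs y -> wf (size xs) e -> y = run o e xs.
Proof.
move=> H; pattern e, xs, y, H.
apply: (@eval_mut o (fun e xs y _ => wf (size xs) e -> y = run o e xs)
   (fun gs xs ys _ => all (fun g => wf (size xs) g) gs -> ys = map (fun g => run o g xs) gs)) => //=.
- move=> f gs xs0 ys y0 Hgs IHgs Hf IHf /andP[Hw1 Hw2].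
  have E := IHgs Hw1; subst ys; apply: IHf; by rewrite size_map.
- move=> g h xs0 y0 _ IH /andP[Hg _]; exact: IH.
- move=> g h n xs0 z y0 _ IH1 _ IH2 Hw.
  move: (Hw) => /andP[_ Hh]; by rewrite (IH2 Hh) (IH1 Hw).
- move=> g gs xs0 y0 ys _ IH1 _ IH2 /andP[H1 H2]; by rewrite -IH1 // -IH2.
Qed.

Definition V i := rf_proj i.
Fixpoint KK n := match n with 0 => rf_zero | n'.+1 => rf_comp rf_succ [:: KK n'] end.
Definition REC m ne e0 step := rf_comp (rf_prec e0 step) (ne :: mkseq rf_proj m).

Lemma run_KK o n xs : run o (KK n) xs = n.
Proof. by elim: n => //= n ->. Qed.

Lemma run_REC o m ne e0 step xs : size xs = m ->
  run o (REC m ne e0 step) xs =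
  nat_rect (fun _ => nat) (run o e0 xs) (fun k z => run o step [:: k, z & xs]) (run o ne xs).
Proof.
move=> Hm; rewrite /REC /=.
have -> : [seq run o g xs | g <- mkseq rf_proj m] = xs.
  by rewrite /mkseq -map_comp -Hm -/(mkseq _ _) mkseq_nth.
by [].
Qed.

Lemma wf_REC n m ne e0 step : m <= n ->
  wf n (REC m ne e0 step) = [&& wf n ne, wf m e0 & wf m.+2 step].
Proof.
move=> Hm; rewrite /REC /= size_map size_iota.
have -> : all (fun g => wf n g) (mkseq rf_proj m).
  rewrite /mkseq all_map; apply/allP => i; rewrite mem_iota /= add0n => Hi.
  exact: leq_trans Hi Hm.
by rewrite andbT; case: (wf n ne).
Qed.
Opaque REC.

Definition Succ e := rf_comp rf_succ [:: e].
Lemma run_Succ o e xs : run o (Succ e) xs = (run o e xs).+1.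
Proof. by []. Qed.
Lemma run_V o i xs : run o (V i) xs = nth 0 xs i.
Proof. by []. Qed.
Definition Orc e := rf_comp rf_oracle [:: e].
Lemma run_Orc o e xs : run o (Orc e) xs = nat_of_bool (o (run o e xs)).
Proof. by []. Qed.
Opaque V Succ Orc.

Definition ADD := REC 2 (V 0) (V 1) (Succ (V 1)).
Definition Add e1 e2 := rf_comp ADD [:: e1; e2].
Lemma run_Add o e1 e2 xs : run o (Add e1 e2) xs = run o e1 xs + run o e2 xs.
Proof.
rewrite /Add /= /ADD run_REC // !run_V /=.
by elim: (run o e1 xs) => //= n ->; rewrite run_Succ run_V.
Qed.
Opaque ADD Add.

Definition MUL := REC 2 (V 0) (KK 0) (Add (V 1) (V 3)).
Definition Mul e1 e2 := rf_comp MUL [:: e1; e2].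
Lemma run_Mul o e1 e2 xs : run o (Mul e1 e2) xs = run o e1 xs * run o e2 xs.
Proof.
rewrite /Mul /= /MUL run_REC // !run_V run_KK /=.
by elim: (run o e1 xs) => //= n ->; rewrite run_Add !run_V /= mulSn addnC.
Qed.
Opaque MUL Mul.

Definition PRED := REC 1 (V 0) (KK 0) (V 0).
Definition Pred e := rf_comp PRED [:: e].
Lemma run_Pred o e xs : run o (Pred e) xs = (run o e xs).-1.
Proof.
rewrite /Pred /= /PRED run_REC // !run_V run_KK /=.
by case: (run o e xs).
Qed.
Opaque PRED Pred.

Definition SUB := REC 2 (V 1) (V 0) (Pred (V 1)).
Definition Sub e1 e2 := rf_comp SUB [:: e1; e2].
Lemma run_Sub o e1 e2 xs : run o (Sub e1 e2) xs = run o e1 xs - run o e2 xs.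
Proof.
rewrite /Sub /= /SUB run_REC // !run_V /=.
elim: (run o e2 xs) => /= [|n ->]; first by rewrite subn0.
by rewrite run_Pred run_V /= subnS.
Qed.
Opaque SUB Sub.

Definition NOT := REC 1 (V 0) (KK 1) (KK 0).
Definition Not e := rf_comp NOT [:: e].
Lemma run_Not o e xs : run o (Not e) xs = nat_of_bool (run o e xs == 0).
Proof.
rewrite /Not /= /NOT run_REC // !run_V run_KK /=.
by case: (run o e xs) => //= n; rewrite run_KK.
Qed.
Opaque NOT Not.

Definition ODD := REC 1 (V 0) (KK 0) (Not (V 1)).
Definition Odd e := rf_comp ODD [:: e].
Lemma run_Odd o e xs : run o (Odd e) xs = nat_of_bool (odd (run o e xs)).
Proof.
rewrite /Odd /= /ODD run_REC // !run_V run_KK /=.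
elim: (run o e xs) => //= n IH; rewrite run_Not run_V /= IH.
by case: (odd n).
Qed.
Opaque ODD Odd.

Definition HALF := REC 1 (V 0) (KK 0) (Add (V 1) (Odd (V 0))).
Definition Half e := rf_comp HALF [:: e].
Lemma run_Half o e xs : run o (Half e) xs = (run o e xs)./2.
Proof.
rewrite /Half /= /HALF run_REC // !run_V run_KK /=.
elim: (run o e xs) => //= n IH; rewrite run_Add run_Odd !run_V /= IH.
by rewrite ?uphalfE -?uphalfE uphalf_half addnC.
Qed.
Opaque HALF Half.

Definition Imp e1 e2 := Not (Not (Add (Not e1) e2)).
Lemma run_Imp o e1 e2 xs b1 b2 : run o e1 xs = nat_of_bool b1 -> run o e2 xs = nat_of_bool b2 ->
  run o (Imp e1 e2) xs = nat_of_bool (b1 ==> b2).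
Proof.
by move=> H1 H2; rewrite /Imp !run_Not run_Add run_Not H1 H2 {H1 H2}; case: b1; case: b2.
Qed.
Lemma run_And o e1 e2 xs b1 b2 : run o e1 xs = nat_of_bool b1 -> run o e2 xs = nat_of_bool b2 ->
  run o (Mul e1 e2) xs = nat_of_bool (b1 && b2).
Proof. by move=> H1 H2; rewrite run_Mul H1 H2 {H1 H2}; case: b1; case: b2. Qed.
Lemma run_Notb o e xs b : run o e xs = nat_of_bool b -> run o (Not e) xs = nat_of_bool (~~ b).
Proof. by move=> H; rewrite run_Not H {H}; case: b. Qed.
Definition Eq e1 e2 := Not (Add (Sub e1 e2) (Sub e2 e1)).
Lemma run_Eq o e1 e2 xs : run o (Eq e1 e2) xs = nat_of_bool (run o e1 xs == run o e2 xs).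
Proof.
rewrite /Eq run_Not run_Add !run_Sub addn_eq0 !subn_eq0 -eqn_leq //.
Qed.

Definition ALL m ne body := REC m ne (KK 1) (Mul (V 1) body).
Lemma run_ALL o m ne body xs (p : nat -> bool) : size xs = m ->
  (forall k z, run o body [:: k, z & xs] = nat_of_bool (p k)) ->
  run o (ALL m ne body) xs = nat_of_bool (all p (iota 0 (run o ne xs))).
Proof.
move=> Hm Hb; rewrite /ALL run_REC // run_KK.
elim: (run o ne xs) => //= n ->.
rewrite run_Mul run_V /= Hb. have -> : p 0 && all p (iota 1 n) = all p (iota 0 n.+1) by []. rewrite -addn1 iotaD all_cat /= andbT add0n. by case: (all p _); case: (p _).
Qed.


Opaque Imp Eq.
Opaque ALL.

Definition pb (P : Prop) : bool := if excluded_middle_informative P then true else false.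
Lemma pbP P : reflect P (pb P).
Proof. by rewrite /pb; case: excluded_middle_informative => H; constructor. Qed.

Definition Xc (L : rel nat) (C : pred nat) (n : nat) : bool :=
  ~~ (C n && all (fun k => C k ==> ~~ L k n) (iota 0 n)).
Definition Ca (A : pred nat) (L : rel nat) (a : nat) : pred nat := fun x => A x && ~~ L x a.
Definition gg A L a n := Xc L (Ca A L a) n.
Definition lab A L a := mkseq (gg A L a) a.+1.
Definition Tm A L (s : seq bool) : bool :=
  all (fun i => nth true s i || (A i && all (fun j => nth true s j == gg A L i j) (iota 0 i.+1)))
      (iota 0 (size s)).

Lemma lexlt_irr X : ~ lexlt X X.
Proof. by case=> n [_ [-> ]]. Qed.

Lemma lexlt_asym X Y : lexlt X Y -> ~ lexlt Y X.
Proof.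
case=> n [H1 [H2 H3]] [m [H4 [H5 H6]]].
case: (ltngtP n m) => Hnm.
- by move: (H4 n Hnm); rewrite H2 H3.
- by move: (H1 m Hnm); rewrite H5 H6.
- by subst; rewrite H2 in H6.
Qed.

Section Math.
Set Default Proof Using "All".
Variables (A : pred nat) (L : rel nat).
Hypothesis HLA : forall x y, L x y -> A x && A y.
Hypothesis Hirr : forall x, ~~ L x x.
Hypothesis Htr : forall x y z, L x y -> L y z -> L x z.
Hypothesis Htot : forall x y, A x -> A y -> x != y -> L x y || L y x.

Definition upper (C : pred nat) :=
  (forall x, C x -> A x) /\ (forall x y, C x -> A y -> L x y -> C y).

Local Notation Xc := (Xc L).
Local Notation Ca := (Ca A L).
Local Notation gg := (gg A L).
Local Notation lab := (lab A L).
Local Notation Tm := (Tm A L).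

Lemma Lasym x y : L x y -> ~~ L y x.
Proof. by move=> H; apply/negP => H'; move: (Hirr x); rewrite (Htr H H'). Qed.

Lemma Ltot' x y : A x -> A y -> ~~ L x y -> (x == y) || L y x.
Proof.
move=> Ax Ay nL; case: eqP => //= /eqP ne.
by move: (Htot Ax Ay ne); rewrite (negbTE nL).
Qed.

Lemma upper_Ca a : upper (Ca a).
Proof.
split; first by move=> x /andP[].
move=> x y /andP[Ax nxa] Ay Lxy; rewrite /Ca Ay /=.
by apply/negP => Lya; move: nxa; rewrite (Htr Lxy Lya).
Qed.

Lemma Xc_ext C C' n : (forall k, k <= n -> C k = C' k) -> Xc C n = Xc C' n.
Proof.
move=> H; rewrite /Xc H //; congr (~~ (_ && _)).
apply: eq_in_all => k; rewrite mem_iota add0n => /andP[_ Hk].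
by rewrite H // ltnW.
Qed.

Lemma Xc_eq C C' : (forall k, C k = C' k) -> Xc C = Xc C'.
Proof. by move=> H; apply: functional_extensionality => n; apply: Xc_ext. Qed.

Lemma Xc_zero C i : upper C -> Xc C i = false -> A i /\ forall j, j <= i -> Xc C j = gg i j.
Proof.
case=> CA Cup; rewrite /Xc => /negbFE /andP[Ci Hall].
have Ai := CA i Ci; split => // j Hj; apply: Xc_ext => k Hk.
have Hki := leq_trans Hk Hj.
move: Hki; rewrite leq_eqVlt => /orP[/eqP -> | Hki]; first by rewrite Ci /Ca Ai Hirr.
have Hk' : C k ==> ~~ L k i by apply: (allP Hall); rewrite mem_iota add0n Hki.
rewrite /Ca; apply/idP/idP.
- by move=> Ck; rewrite (CA k Ck) (implyP Hk' Ck).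
- case/andP=> Ak nL; have := Ltot' Ak Ai nL; rewrite (ltn_eqF Hki) /= => Lik.
  exact: Cup Ci Ak Lik.
Qed.

Lemma Xc_lex C C' : upper C -> upper C' -> (forall x, C' x -> C x) ->
  (exists x, C x && ~~ C' x) -> lexlt (Xc C) (Xc C').
Proof.
move=> [CA Cup] [CA' Cup'] sub ex.
case: (ex_minnP ex) => n /andP[Cn nC'n] Hmin.
have agree : forall k, k < n -> C k = C' k.
  move=> k Hk; case C'k: (C' k); first by rewrite (sub _ C'k).
  apply/negP => Ck; have := Hmin k; rewrite Ck C'k => /(_ isT); by rewrite leqNgt Hk.
exists n; split; last split.
- move=> m Hm; apply: Xc_ext => k Hk; apply: agree; exact: leq_ltn_trans Hk Hm.
- rewrite /Xc Cn /=; apply: negbF; apply/allP => k; rewrite mem_iota add0n => /andP[_ Hk].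
  apply/implyP => Ck; apply/negP => Lkn.
  have C'k : C' k by rewrite -agree.
  by move: nC'n; rewrite (Cup' _ _ C'k (CA _ Cn) Lkn).
- by rewrite /Xc (negbTE nC'n).
Qed.

Lemma upper_cmp C C' : upper C -> upper C' -> (forall x, C x -> C' x) \/ (forall x, C' x -> C x).
Proof.
move=> [CA Cup] [CA' Cup'].
case: (classic (forall x, C x -> C' x)) => H; first by left.
right => y C'y; apply/negP => nCy.
case: (not_all_ex_not _ _ H) => x Hx.
have Cx : C x by apply/negP => nCx; apply: Hx => Cx; by rewrite Cx in nCx.
have nC'x : ~~ C' x by apply/negP => C'x; apply: Hx.
have ne : x != y by apply/eqP => E; subst; by rewrite Cx in nCy.
case/orP: (Htot (CA _ Cx) (CA' _ C'y) ne) => Lxy.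
- by move: nCy; rewrite (Cup _ _ Cx (CA' _ C'y) Lxy).
- by move: nC'x; rewrite (Cup' _ _ C'y (CA _ Cx) Lxy).
Qed.

Lemma Xc_lexE C C' : upper C -> upper C' ->
  lexlt (Xc C) (Xc C') <-> ((forall x, C' x -> C x) /\ exists x, C x && ~~ C' x).
Proof.
move=> uC uC'; split; last by case=> H1 H2; apply: Xc_lex.
move=> Hl.
have noteq : ~ (forall x, C x = C' x).
  by move=> H; move: Hl; rewrite (Xc_eq H); apply: lexlt_irr.
case: (upper_cmp uC uC') => sub.
- exfalso; apply: noteq => x; apply/idP/idP; first exact: sub.
  move=> C'x; apply/negPn/negP => nCx.
  apply: (lexlt_asym Hl); apply: Xc_lex => //; exists x; by rewrite C'x.
- split => //; apply: NNPP => Hn; apply: noteq => x.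
  apply/idP/idP; last exact: sub.
  move=> Cx; apply/negPn/negP => nC'x; apply: Hn; exists x; by rewrite Cx.
Qed.

Lemma Ca_self a : A a -> Ca a a.
Proof. by move=> Aa; rewrite /Ca Aa Hirr. Qed.

Lemma Xc_Ca a : A a -> Xc (Ca a) = ext1 (lab a).
Proof.
move=> Aa; apply: functional_extensionality => n.
rewrite /ext1 /lab size_mkseq; case: ltnP => Hn; first by rewrite nth_mkseq.
rewrite /Xc; apply/negP => /andP[/andP[An nna] Hall].
have := allP Hall a; rewrite mem_iota add0n Hn => /(_ isT); rewrite Ca_self //= => nan.
have ne : n != a by rewrite gtn_eqF.
by move: (Htot An Aa ne); rewrite (negbTE nna) (negbTE nan).
Qed.

Lemma body_Xc C : upper C -> body Tm (Xc C).
Proof.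
move=> uC n; rewrite /Tm size_mkseq; apply/allP => i; rewrite mem_iota add0n => /andP[_ Hi].
rewrite nth_mkseq //; case Xi: (Xc C i); first by [].
case: (Xc_zero uC Xi) => Ai Hj; rewrite orFb Ai andTb.
apply/allP => j; rewrite mem_iota add0n => /andP[_ Hji].
by rewrite nth_mkseq ?Hj // (leq_trans Hji Hi).
Qed.

Lemma tree_Tm : is_tree Tm.
Proof.
move=> s n /allP H; apply/allP => i; rewrite mem_iota add0n size_take_min leq_min => /andP[_ /andP[Hin Hs]].
have := H i; rewrite mem_iota add0n Hs => /(_ isT).
rewrite nth_take //; case: (nth true s i); first by [].
rewrite !orFb => /andP[Ai /allP Hj]; rewrite Ai andTb.
apply/allP => j Hj'; rewrite nth_take; first exact: Hj.
by move: Hj'; rewrite mem_iota add0n ltnS => /andP[_ H2]; exact: leq_ltn_trans H2 Hin.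
Qed.

Lemma lab_T a : A a -> Tm (lab a).
Proof. by move=> Aa; have := body_Xc (upper_Ca a) a.+1. Qed.

Lemma gg_self a : A a -> gg a a = false.
Proof.
move=> Aa; rewrite /gg /Xc Ca_self //=; apply: negbF; apply/allP => k _.
by apply/implyP => /andP[].
Qed.

Lemma prop1 s : Tm s -> ((s != [::] /\ last true s = false) <-> exists a, A a /\ s = lab a).
Proof.
move=> Ts; split.
- case=> ne Hl.
  have Hi : (size s).-1 < size s by case: s ne {Ts Hl}.
  have := allP Ts (size s).-1; rewrite mem_iota add0n Hi nth_last Hl orFb => /(_ isT).
  case/andP=> Ai /allP Hj; exists (size s).-1; split => //.
  apply: (@eq_from_nth _ true); first by rewrite size_mkseq prednK // lt0n size_eq0.
  move=> j Hjs; rewrite nth_mkseq; last by rewrite prednK // lt0n size_eq0.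
  apply/eqP/Hj; rewrite mem_iota add0n prednK //; by rewrite lt0n size_eq0.
- case=> a [Aa ->]; split; first by rewrite -size_eq0 size_mkseq.
  by rewrite -nth_last size_mkseq /= nth_mkseq // gg_self.
Qed.

Lemma prop3 a b : A a -> A b -> (L a b <-> lexlt (ext1 (lab a)) (ext1 (lab b))).
Proof.
move=> Aa Ab; rewrite -(Xc_Ca Aa) -(Xc_Ca Ab) (Xc_lexE (upper_Ca a) (upper_Ca b)); split.
- move=> Lab; split.
  + move=> x /andP[Ax nxb]; rewrite /Ca Ax /=; apply/negP => Lxa.
    by move: nxb; rewrite (Htr Lxa Lab).
  + by exists a; rewrite Ca_self //= /Ca Aa Lab.
- case=> _ [x /andP[/andP[Ax nxa] nCb]].
  have Lxb : L x b by move: nCb; rewrite /Ca Ax /= negbK.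
  have ne : a != b by apply/eqP => E; subst; by rewrite Lxb in nxa.
  case/orP: (Htot Aa Ab ne) => // Lba.
  by move: nxa; rewrite (Htr Lxb Lba).
Qed.

Lemma body_zero X i : body Tm X -> X i = false ->
  A i /\ forall j, j <= i -> X j = gg i j.
Proof.
move=> bX Xi; have := bX i.+1; rewrite /Tm size_mkseq => /allP /(_ i).
rewrite mem_iota add0n ltnSn nth_mkseq // Xi orFb => /(_ isT) /andP[Ai /allP Hj].
split => // j Hji; have := Hj j; rewrite mem_iota add0n ltnS Hji nth_mkseq ?ltnS //.
by move=> /(_ isT) /eqP.
Qed.

Lemma body_chain X i i' : body Tm X -> X i = false -> X i' = false -> i < i' -> L i' i.
Proof.
move=> bX Xi Xi' lt; case: (body_zero bX Xi') => Ai' Hj.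
have := Hj i (ltnW lt); rewrite Xi /gg /Xc => /esym /negbFE /andP[/andP[Ai nL] _].
by move: (Ltot' Ai Ai' nL); rewrite ltn_eqF.
Qed.

Definition leL j z := (j == z) || L j z.

Lemma leL_trans x y z : leL x y -> leL y z -> leL x z.
Proof.
rewrite /leL => /orP[/eqP -> // | Lxy] /orP[/eqP <- | Lyz]; first by rewrite Lxy orbT.
by rewrite (Htr Lxy Lyz) orbT.
Qed.

Lemma leL_nL j z : leL j z -> ~~ L z j.
Proof. by case/orP => [/eqP -> | /Lasym]. Qed.

Lemma nL_leL j z : A j -> A z -> ~~ L z j -> leL j z.
Proof. by move=> Aj Az nL; move: (Ltot' Az Aj nL); rewrite /leL eq_sym. Qed.

Lemma chain_leL X i i' : body Tm X -> X i = false -> X i' = false -> i <= i' -> leL i' i.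
Proof.
move=> bX Xi Xi'; rewrite leq_eqVlt => /orP[/eqP -> | lt]; first by rewrite /leL eqxx.
by rewrite /leL (body_chain bX Xi Xi' lt) orbT.
Qed.

Lemma body_char X : body Tm X -> exists C, upper C /\ X = Xc C.
Proof.
move=> bX.
pose C := fun x => pb (A x /\ exists i, X i = false /\ leL i x).
have uC : upper C.
  split; first by move=> x /pbP[].
  move=> x y /pbP[Ax [i [Xi lix]]] Ay Lxy; apply/pbP; split => //; exists i; split => //.
  by apply: leL_trans lix _; rewrite /leL Lxy orbT.
exists C; split => //; apply: functional_extensionality => n.
case: (classic (exists N, forall i, X i = false -> i < N)) => [[N HN] | HN].
- case: (classic (exists i, ~~ X i)) => [exZ | noZ].
  + have ub : forall i, ~~ X i -> i <= N by move=> i /negbTE /HN /ltnW.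
    case: (ex_maxnP exZ ub) => a /negbTE Xa Hmax.
    have [Aa Ha] := body_zero bX Xa.
    have CE : forall z, C z = Ca a z.
      move=> z; apply/pbP/idP.
      * case=> Az [i [Xi liz]]; rewrite /Ca Az /=; apply: leL_nL.
        apply: leL_trans liz; apply: (chain_leL bX Xi Xa); apply: Hmax; by rewrite Xi.
      * case/andP=> Az nza; split => //; exists a; split => //; exact: nL_leL.
    rewrite (Xc_eq CE) Xc_Ca // /ext1 /lab size_mkseq; case: ltnP => Hn.
    * by rewrite nth_mkseq // Ha.
    * case Xn: (X n) => //; have := Hmax n; rewrite Xn => /(_ isT); by rewrite leqNgt Hn.
  + have Xt : forall i, X i = true.
      move=> i; apply/negPn/negP => H; apply: noZ; by exists i.
    rewrite Xt /Xc; apply/esym/negP => /andP[/pbP[_ [i [Xi _]]] _]; by rewrite Xt in Xi.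
- have unb : forall N, exists i, X i = false /\ N <= i.
    move=> N; apply: NNPP => H; apply: HN; exists N => i Xi.
    rewrite ltnNge; apply/negP => HNi; apply: H; by exists i.
  have bound : forall n, exists N, forall x, x <= n -> C x ->
      exists i, [/\ X i = false, i <= N & leL i x].
    elim => [|m [N HNb]].
    * case C0: (C 0).
      - case/pbP: C0 => _ [i [Xi li0]]; exists i => x; rewrite leqn0 => /eqP -> _.
        by exists i.
      - exists 0 => x; rewrite leqn0 => /eqP ->; by rewrite C0.
    * case Cm: (C m.+1).
      - case/pbP: Cm => _ [i [Xi lim]]; exists (maxn N i) => x; rewrite leq_eqVlt => /orP[/eqP -> _ | Hx Cx].
        + by exists i; rewrite leq_maxr.
        + case: (HNb x Hx Cx) => i' [Xi' Hi' l']; exists i'; split => //.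
          by rewrite (leq_trans Hi') // leq_maxl.
      - exists N => x; rewrite leq_eqVlt => /orP[/eqP -> | Hx Cx]; first by rewrite Cm.
        exact: HNb.
  case: (bound n) => N HN'.
  case: (unb (maxn N n)) => i [Xi Hi].
  have [Ai Hj] := body_zero bX Xi.
  rewrite Hj; last by rewrite (leq_trans _ Hi) // leq_maxr.
  rewrite /gg; apply: Xc_ext => k Hk; apply/idP/idP.
  + case/andP=> Ak nki; apply/pbP; split => //; exists i; split => //; exact: nL_leL.
  + move=> Ck; case/pbP: (Ck) => Ak _.
    case: (HN' k Hk Ck) => i' [Xi' Hi' l']; rewrite /Ca Ak /=; apply: leL_nL.
    apply: leL_trans l'; apply: (chain_leL bX Xi' Xi).
    exact: leq_trans Hi' (leq_trans (leq_maxl N n) Hi).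
Qed.

Lemma prop4 X : body Tm X ->
  ((exists a, A a /\ X = ext1 (lab a)) <-> has_successor_in (body Tm) X).
Proof.
move=> bX; case: (body_char bX) => C [uC EX]; subst X; split.
- case=> a [Aa EX]; rewrite -Xc_Ca // in EX.
  pose C' := fun x => Ca a x && (x != a).
  have uC' : upper C'.
    split; first by move=> x /andP[/andP[]].
    move=> x y /andP[Cx _] Ay Lxy; rewrite /C' ((upper_Ca a).2 _ _ Cx Ay Lxy) /=.
    apply/eqP => E; subst y; by move: Cx => /andP[_]; rewrite Lxy.
  exists (Xc C'); split; first exact: body_Xc.
  rewrite EX; split.
  + apply: Xc_lex => //; [exact: upper_Ca | by move=> x /andP[] |].
    by exists a; rewrite /C' Ca_self // eqxx.
  + case=> Z [bZ [l1 l2]]; case: (body_char bZ) => C'' [uC'' EZ]; subst Z.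
    case/(Xc_lexE (upper_Ca a) uC''): l1 => sub1 [x /andP[Cax nC''x]].
    case/(Xc_lexE uC'' uC'): l2 => sub2 [y /andP[C''y nC'y]].
    have ya : y = a by move: nC'y; rewrite /C' (sub1 _ C''y) /= negbK => /eqP.
    subst y; case/andP: (Cax) => Ax nxa.
    have := nL_leL Aa Ax nxa; rewrite /leL => /orP[/eqP E | Lax].
    * by subst x; rewrite C''y in nC''x.
    * by move: nC''x; rewrite (uC''.2 _ _ C''y Ax Lax).
- case=> Y [bY [lXY nZ]]; case: (body_char bY) => C'' [uC'' EY]; subst Y.
  case/(Xc_lexE uC uC''): lXY => sub [x /andP[Cx nC''x]].
  have Ax := uC.1 _ Cx.
  have minx : forall y, C y -> ~~ L y x.
    move=> y Cy; apply/negP => Lyx; apply: nZ; exists (Xc (Ca x)); split.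
      exact: body_Xc (upper_Ca x).
    split.
    + apply: Xc_lex => //; first exact: upper_Ca.
      * move=> z /andP[Az nzx]; have := nL_leL Ax Az nzx; rewrite /leL => /orP[/eqP <- // | Lxz].
        exact: uC.2 _ _ Cx Az Lxz.
      * by exists y; rewrite Cy /Ca Lyx andbF.
    + apply: Xc_lex => //; first exact: upper_Ca.
      * move=> z C''z; rewrite /Ca (uC''.1 _ C''z) /=; apply/negP => Lzx.
        by move: nC''x; rewrite (uC''.2 _ _ C''z Ax Lzx).
      * by exists x; rewrite Ca_self.
  exists x; split => //; rewrite -Xc_Ca //; apply: Xc_eq => z; apply/idP/idP.
  + by move=> Cz; rewrite /Ca (uC.1 _ Cz) minx.
  + case/andP=> Az nzx; have := nL_leL Ax Az nzx; rewrite /leL => /orP[/eqP <- // | Lxz].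
    exact: uC.2 _ _ Cx Az Lxz.
Qed.

Lemma body_iff X : body Tm X <-> exists C, upper C /\ X = Xc C.
Proof. by split; [exact: body_char | case=> C [uC ->]; exact: body_Xc]. Qed.

Lemma lab_inj a b : A a -> A b -> ext1 (lab a) = ext1 (lab b) -> a = b.
Proof.
move=> Aa Ab E; apply/eqP; apply/negP => /negP ne.
case/orP: (Htot Aa Ab ne) => H.
- by move: (prop3 Aa Ab) => [/(_ H)]; rewrite E => /lexlt_irr.
- by move: (prop3 Ab Aa) => [/(_ H)]; rewrite E => /lexlt_irr.
Qed.
End Math.

Definition LOH (A : pred nat) (L : rel nat) :=
  (forall x y, L x y -> A x && A y) /\ (forall x, ~~ L x x) /\
  (forall x y z, L x y -> L y z -> L x z) /\
  (forall x y, A x -> A y -> x != y -> L x y || L y x).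

Lemma Xc_inj A L : LOH A L -> forall C C', upper A L C -> upper A L C' ->
  Xc L C = Xc L C' -> forall x, C x = C' x.
Proof.
move=> [a [b [c d]]] C C' uC uC' E; apply: NNPP => H.
case: (not_all_ex_not _ _ H) => x Hx.
case: (upper_cmp a b c d uC uC') => sub.
- have : lexlt (Xc L C') (Xc L C).
    apply: (Xc_lex a b c d) => //; exists x.
    by move: Hx; case Cx: (C x); case C'x: (C' x) => //; rewrite (sub _ Cx) in C'x.
  by rewrite E => /lexlt_irr.
- have : lexlt (Xc L C) (Xc L C').
    apply: (Xc_lex a b c d) => //; exists x.
    by move: Hx; case Cx: (C x); case C'x: (C' x) => //; rewrite (sub _ C'x) in Cx.
  by rewrite E => /lexlt_irr.
Qed.

Lemma iso_bodies A1 L1 A2 L2 : LOH A1 L1 -> LOH A2 L2 ->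
  order_iso (fun a => A1 a) (fun a b => L1 a b) (fun b => A2 b) (fun a b => L2 a b) ->
  order_iso (body (Tm A1 L1)) lexlt (body (Tm A2 L2)) lexlt.
Proof.
move=> H1 H2; have H1' := H1; have H2' := H2.
move: H1 H2 => [a1 [b1 [c1 d1]]] [a2 [b2 [c2 d2]]] [f [fA [fS fL]]].
have finj : forall x y, A1 x -> A1 y -> f x = f y -> x = y.
  move=> x y Ax Ay E; apply/eqP; apply/negP => /negP ne.
  case/orP: (d1 _ _ Ax Ay ne) => L.
  - by move: ((fL _ _ Ax Ay).1 L); rewrite E (negbTE (b2 _)).
  - by move: ((fL _ _ Ay Ax).1 L); rewrite E (negbTE (b2 _)).
pose img (C : pred nat) y := pb (exists x, C x /\ f x = y).
pose pre (C2 : pred nat) x := A1 x && C2 (f x).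
have img_f : forall C, upper A1 L1 C -> forall x, A1 x -> img C (f x) = C x.
  move=> C uC x Ax; apply/pbP/idP; last by move=> Cx; exists x.
  case=> x' [Cx' E]; by rewrite -(finj _ _ (uC.1 _ Cx') Ax E).
have up_img : forall C, upper A1 L1 C -> upper A2 L2 (img C).
  move=> C uC; split.
  - by move=> y /pbP[x [Cx <-]]; apply: fA; apply: uC.1.
  - move=> y y' /pbP[x [Cx <-]] Ay' L; case: (fS _ Ay') => x' [Ax' E]; subst y'.
    have Ax := uC.1 _ Cx.
    apply/pbP; exists x'; split => //; apply: (uC.2 _ _ Cx Ax').
    by apply/(fL _ _ Ax Ax').
have up_pre : forall C2, upper A2 L2 C2 -> upper A1 L1 (pre C2).
  move=> C2 uC2; split; first by move=> x /andP[].
  move=> x y /andP[Ax Cfx] Ay L; rewrite /pre Ay /=; apply: uC2.2 Cfx (fA _ Ay) _.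
  by apply/(fL _ _ Ax Ay).
have img_pre : forall C2, upper A2 L2 C2 -> forall y, img (pre C2) y = C2 y.
  move=> C2 uC2 y; apply/pbP/idP.
  - by case=> x [/andP[_ C] <-].
  - move=> Cy; case: (fS _ (uC2.1 _ Cy)) => x [Ax E]; exists x; split => //.
    by rewrite /pre Ax E.
pose F X := match excluded_middle_informative (exists C, upper A1 L1 C /\ X = Xc L1 C) with
  | left H => Xc L2 (img (proj1_sig (constructive_indefinite_description _ H)))
  | right _ => X end.
have FE : forall C, upper A1 L1 C -> F (Xc L1 C) = Xc L2 (img C).
  move=> C uC; rewrite /F; case: excluded_middle_informative => [H|H]; last first.
    by exfalso; apply: H; exists C.
  case: (constructive_indefinite_description _ H) => C0 [u0 E] /=.
  have -> // : C0 = C.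
  apply: functional_extensionality => x; apply: (Xc_inj H1' u0 uC); by rewrite E.
exists F; split; last split.
- move=> X bX; case: (body_char a1 b1 c1 d1 bX) => C [uC ->]; rewrite FE //.
  exact: body_Xc a2 b2 c2 d2 _ (up_img _ uC).
- move=> Y bY; case: (body_char a2 b2 c2 d2 bY) => C2 [uC2 ->].
  exists (Xc L1 (pre C2)); split; first exact: body_Xc a1 b1 c1 d1 _ (up_pre _ uC2).
  rewrite FE; last exact: up_pre.
  by apply: (Xc_eq a2 b2 c2 d2); apply: img_pre.
- move=> X Y bX bY.
  case: (body_char a1 b1 c1 d1 bX) => C [uC ->].
  case: (body_char a1 b1 c1 d1 bY) => D [uD ->].
  rewrite !FE //.
  rewrite (Xc_lexE a1 b1 c1 d1 uC uD) (Xc_lexE a2 b2 c2 d2 (up_img _ uC) (up_img _ uD)).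
  split.
  + case=> sub [x /andP[Cx nDx]]; split.
    * move=> y /pbP[x' [Dx' <-]]; rewrite img_f ?(uD.1 _ Dx') //; exact: sub.
    * exists (f x); rewrite !img_f ?(uC.1 _ Cx) //; by rewrite Cx.
  + case=> sub [y /andP[/pbP[x [Cx <-]] nD]]; split.
    * move=> x' Dx'; have Ax' := uD.1 _ Dx'; rewrite -img_f //; apply: sub.
      by rewrite img_f.
    * exists x; rewrite Cx /=; by rewrite -img_f // (uC.1 _ Cx).
Qed.

Section Transfer.
Variables (P Q : (nat -> bool) -> Prop) (h : (nat -> bool) -> (nat -> bool)).
Hypothesis hP : forall x, P x -> Q (h x).
Hypothesis hS : forall y, Q y -> exists x, P x /\ h x = y.
Hypothesis hL : forall x y, P x -> P y -> (lexlt x y <-> lexlt (h x) (h y)).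

Lemma succ_fwd X : P X -> has_successor_in P X -> has_successor_in Q (h X).
Proof.
move=> PX [Y [PY [lXY nZ]]]; exists (h Y); split; first exact: hP.
split; first exact: ((hL PX PY).1 lXY).
case=> Z' [QZ' [l1 l2]]; case: (hS QZ') => Z [PZ E]; subst Z'.
apply: nZ; exists Z; split => //; split; [exact: ((hL PX PZ).2 l1) | exact: ((hL PZ PY).2 l2)].
Qed.

Lemma succ_bwd X : P X -> has_successor_in Q (h X) -> has_successor_in P X.
Proof.
move=> PX [Y' [QY' [l nZ']]]; case: (hS QY') => Y [PY E]; subst Y'.
exists Y; split => //; split; first exact: ((hL PX PY).2 l).
case=> Z [PZ [l1 l2]]; apply: nZ'; exists (h Z); split; first exact: hP.
by split; [exact: ((hL PX PZ).1 l1) | exact: ((hL PZ PY).1 l2)].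
Qed.
End Transfer.

Lemma iso_back A1 L1 A2 L2 : LOH A1 L1 -> LOH A2 L2 ->
  order_iso (body (Tm A1 L1)) lexlt (body (Tm A2 L2)) lexlt ->
  order_iso (fun a => A1 a) (fun a b => L1 a b) (fun b => A2 b) (fun a b => L2 a b).
Proof.
move=> [a1 [b1 [c1 d1]]] [a2 [b2 [c2 d2]]] [h [hP [hS hL]]].
have bl1 : forall a, A1 a -> body (Tm A1 L1) (ext1 (lab A1 L1 a)).
  move=> a Aa; rewrite -(Xc_Ca a1 b1 c1 d1 Aa); exact: body_Xc a1 b1 c1 d1 _ (upper_Ca a1 b1 c1 d1 a).
have bl2 : forall a, A2 a -> body (Tm A2 L2) (ext1 (lab A2 L2 a)).
  move=> a Aa; rewrite -(Xc_Ca a2 b2 c2 d2 Aa); exact: body_Xc a2 b2 c2 d2 _ (upper_Ca a2 b2 c2 d2 a).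
have ex : forall a, A1 a -> exists b, A2 b /\ h (ext1 (lab A1 L1 a)) = ext1 (lab A2 L2 b).
  move=> a Aa; apply/(prop4 a2 b2 c2 d2 (hP _ (bl1 _ Aa))).
  apply: (succ_fwd hP hS hL (bl1 _ Aa)).
  by apply/(prop4 a1 b1 c1 d1 (bl1 _ Aa)); exists a.
pose g a := match excluded_middle_informative
    (exists b, A2 b /\ h (ext1 (lab A1 L1 a)) = ext1 (lab A2 L2 b)) with
  | left H => proj1_sig (constructive_indefinite_description _ H)
  | right _ => 0 end.
have gspec : forall a, A1 a -> A2 (g a) /\ h (ext1 (lab A1 L1 a)) = ext1 (lab A2 L2 (g a)).
  move=> a Aa; rewrite /g; case: excluded_middle_informative => [H|H]; last first.
    by exfalso; apply: H; apply: ex.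
  by case: (constructive_indefinite_description _ H).
exists g; split; last split.
- by move=> a Aa; case: (gspec a Aa).
- move=> b Ab; case: (hS _ (bl2 _ Ab)) => X [bX E].
  have : has_successor_in (body (Tm A1 L1)) X.
    apply: (succ_bwd hP hS hL bX); rewrite E.
    by apply/(prop4 a2 b2 c2 d2 (bl2 _ Ab)); exists b.
  move/(prop4 a1 b1 c1 d1 bX) => [a [Aa EX]]; subst X.
  exists a; split => //; case: (gspec a Aa) => Ag Eg.
  by apply: (lab_inj a2 b2 c2 d2 Ag Ab); rewrite -Eg E.
- move=> a b Aa Ab; case: (gspec a Aa) => Aga Ea; case: (gspec b Ab) => Agb Eb.
  rewrite (prop3 a1 b1 c1 d1 Aa Ab) (prop3 a2 b2 c2 d2 Aga Agb) -Ea -Eb.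
  exact: hL (bl1 _ Aa) (bl1 _ Ab).
Qed.
Opaque REC V Succ Orc ADD Add MUL Mul PRED Pred SUB Sub NOT Not ODD Odd HALF Half Imp Eq ALL.

Definition Ao (o : nat -> bool) : pred nat := fun x => o x.*2.
Definition Lo (o : nat -> bool) : rel nat := fun x y => o (cpair x y).*2.+1.

Definition C2P := REC 1 (V 0) (KK 0) (Add (V 1) (V 0)).
Definition C2 e := rf_comp C2P [:: e].
Lemma run_C2 o e xs : run o (C2 e) xs = 'C(run o e xs, 2).
Proof.
rewrite /C2 /= /C2P run_REC // run_V run_KK /=.
elim: (run o e xs) => //= n ->; by rewrite run_Add !run_V /= binS bin1.
Qed.
Opaque C2P C2.

Definition Cp e1 e2 := Add (C2 (Succ (Add e1 e2))) e2.
Lemma run_Cp o e1 e2 xs : run o (Cp e1 e2) xs = cpair (run o e1 xs) (run o e2 xs).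
Proof. by rewrite /Cp run_Add run_C2 run_Succ run_Add /cpair addn1. Qed.
Opaque Cp.

Definition Am e := Orc (Add e e).
Lemma run_Am o e xs : run o (Am e) xs = nat_of_bool (Ao o (run o e xs)).
Proof. by rewrite /Am run_Orc run_Add addnn. Qed.
Definition Lt e1 e2 := Orc (Succ (Add (Cp e1 e2) (Cp e1 e2))).
Lemma run_Lt o e1 e2 xs : run o (Lt e1 e2) xs = nat_of_bool (Lo o (run o e1 xs) (run o e2 xs)).
Proof. by rewrite /Lt run_Orc run_Succ run_Add run_Cp addnn. Qed.
Opaque Am Lt.

Definition GP := Not (Mul (Mul (Am (V 1)) (Not (Lt (V 1) (V 0))))
   (ALL 2 (V 1) (Imp (Mul (Am (V 0)) (Not (Lt (V 0) (V 2)))) (Not (Lt (V 0) (V 3)))))).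
Definition Gc e1 e2 := rf_comp GP [:: e1; e2].
Lemma run_Gc o e1 e2 xs : run o (Gc e1 e2) xs =
  nat_of_bool (gg (Ao o) (Lo o) (run o e1 xs) (run o e2 xs)).
Proof.
rewrite /Gc /= /GP /gg /Xc /Ca.
set a := run o e1 xs; set n := run o e2 xs.
apply: run_Notb; apply: run_And.
  apply: run_And; first by rewrite run_Am run_V.
  by apply: run_Notb; rewrite run_Lt !run_V.
apply: run_ALL => // k z.
apply: run_Imp.
  apply: run_And; first by rewrite run_Am run_V.
  by apply: run_Notb; rewrite run_Lt !run_V.
by apply: run_Notb; rewrite run_Lt !run_V.
Qed.
Opaque GP Gc.

Definition sh (c : nat) := (c.-1)./2.
Definition CIP := REC 2 (V 0) (V 1) (Half (Pred (V 1))).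
Definition Ci e1 e2 := rf_comp CIP [:: e1; e2].
Lemma run_Ci o e1 e2 xs : run o (Ci e1 e2) xs = iter (run o e1 xs) sh (run o e2 xs).
Proof.
rewrite /Ci /= /CIP run_REC // !run_V /=.
by elim: (run o e1 xs) => //= n ->; rewrite run_Half run_Pred run_V.
Qed.
Opaque CIP Ci.

Definition ET := ALL 1 (V 0) (ALL 3 (Succ (V 0))
   (Imp (Odd (Ci (V 2) (V 4))) (Mul (Am (V 2)) (Eq (Not (Odd (Ci (V 0) (V 4)))) (Gc (V 2) (V 0)))))).

Definition Tc A L c := all (fun i => all (fun j =>
   odd (iter i sh c) ==> (A i && ((~~ odd (iter j sh c)) == gg A L i j))) (iota 0 i.+1)) (iota 0 c).

Lemma run_ET o c : run o ET [:: c] = nat_of_bool (Tc (Ao o) (Lo o) c).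
Proof.
rewrite /ET; apply: run_ALL => // i z.
apply: run_ALL => // j w.
apply: run_Imp; first by rewrite run_Odd run_Ci !run_V.
apply: run_And; first by rewrite run_Am run_V.
rewrite run_Eq run_Not run_Odd run_Ci run_Gc !run_V /=.
by case: (odd _); case: (gg _ _ _ _).
Qed.

Definition PWP := REC 1 (V 0) (KK 1) (Add (V 1) (V 1)).
Definition Pw e := rf_comp PWP [:: e].
Lemma run_Pw o e xs : run o (Pw e) xs = 2 ^ (run o e xs).
Proof.
rewrite /Pw /= /PWP run_REC // run_V run_KK /=.
by elim: (run o e xs) => //= n ->; rewrite run_Add !run_V /= expnS mul2n addnn.
Qed.
Opaque PWP Pw.

Definition EL := REC 1 (Succ (V 0)) (KK 0) (Add (V 1) (Mul (Pw (V 0)) (Succ (Gc (V 2) (V 0))))).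

Lemma code_rcons s b : code_str (rcons s b) = code_str s + 2 ^ (size s) * (1 + b).
Proof.
elim: s => [|x s IH] /=; first by case: b.
by rewrite IH doubleD -addnA [_ + (1 + x)]addnC addnA expnS mul2n doubleMl -?mul2n.
Qed.

Lemma code_mkseq (f : nat -> bool) n :
  code_str (mkseq f n) = nat_rect (fun _ => nat) 0 (fun i z => z + 2 ^ i * (1 + f i)) n.
Proof. by elim: n => // n IH; rewrite mkseqS code_rcons size_mkseq IH. Qed.

Lemma run_EL o a : run o EL [:: a] = code_str (lab (Ao o) (Lo o) a).
Proof.
rewrite /EL run_REC // run_Succ run_V run_KK /lab code_mkseq.
move: (nth 0 [:: a] 0).+1 => m.
elim: m => // n IH; rewrite [LHS]/= IH [RHS]/=.
by rewrite run_Add run_Mul run_Pw run_Succ run_Gc !run_V /= add1n.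
Qed.

Lemma wf_ET : wf 1 ET.
Proof. by vm_compute. Qed.
Lemma wf_EL : wf 1 EL.
Proof. by vm_compute. Qed.

Lemma sh_cons b s : sh (code_str (b :: s)) = code_str s.
Proof.
by rewrite /sh /= add1n addnS /= addnC half_bit_double.
Qed.

Lemma iter_sh i s : iter i sh (code_str s) = code_str (drop i s).
Proof.
elim: i s => [|i IH] s; first by rewrite drop0.
rewrite iterSr; case: s => [|b s] /=; first by move: (IH [::]).
by rewrite sh_cons IH.
Qed.

Lemma odd_code_cons b s : odd (code_str (b :: s)) = ~~ b.
Proof. by rewrite /= oddD odd_double /=; case: b. Qed.

Lemma size_code s : size s <= code_str s.
Proof.
elim: s => //= b s IH; rewrite -addnn; case: b => /=; lia.
Qed.

Lemma odd_iter s i : odd (iter i sh (code_str s)) = (i < size s) && ~~ nth true s i.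
Proof.
rewrite iter_sh; case: ltnP => Hi /=.
- by rewrite (drop_nth true Hi) odd_code_cons.
- by rewrite drop_oversize.
Qed.

Lemma Tc_code A L s : Tc A L (code_str s) = Tm A L s.
Proof.
rewrite /Tc /Tm.
have -> : iota 0 (code_str s) = iota 0 (size s) ++ iota (size s) (code_str s - size s).
  by rewrite -iotaD subnKC // size_code.
rewrite all_cat.
have -> : all (fun i => all (fun j => odd (iter i sh (code_str s)) ==>
    (A i && ((~~ odd (iter j sh (code_str s))) == gg A L i j))) (iota 0 i.+1))
    (iota (size s) (code_str s - size s)) = true.
  apply/allP => i; rewrite mem_iota => /andP[Hi _]; apply/allP => j _.
  by rewrite odd_iter ltnNge Hi.
rewrite andbT; apply: eq_in_all => i; rewrite mem_iota add0n => /andP[_ Hi].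
rewrite odd_iter Hi andTb; case: (nth true s i); first by rewrite orTb; apply/allP.
rewrite orFb; transitivity (all (fun j => A i && (nth true s j == gg A L i j)) (iota 0 i.+1)).
  apply: eq_in_all => j; rewrite mem_iota add0n ltnS => /andP[_ Hj].
  by rewrite odd_iter (leq_ltn_trans Hj Hi) negbK.
by case: (A i).
Qed.

Definition LA (A : pred nat) (lt : rel nat) : rel nat := fun a b => [&& A a, A b & lt a b].

Lemma setup o A lt : presents o A lt -> linear_order A lt ->
  Ao o = A /\ Lo o = LA A lt /\ LOH A (LA A lt).
Proof.
move=> [pA pL] [irr [tr tot]]; split; last split.
- by apply: functional_extensionality => x; rewrite /Ao pA.
- apply: functional_extensionality => x; apply: functional_extensionality => y.
  by rewrite /Lo pL.
- split; last split; last split.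
  + by move=> x y /and3P[-> -> _].
  + by move=> x; apply/negP => /and3P[Ax _ L]; move: (irr x Ax); rewrite L.
  + move=> x y z /and3P[Ax Ay Lxy] /and3P[_ Az Lyz]; rewrite /LA Ax Az /=.
    exact: tr Ax Ay Az Lxy Lyz.
  + by move=> x y Ax Ay ne; rewrite /LA Ax Ay /=; apply: tot.
Qed.

Lemma tree_ofE o A lt : presents o A lt -> linear_order A lt ->
  forall s, tree_of ET o s <-> Tm A (LA A lt) s.
Proof.
move=> pr lo; case: (setup pr lo) => EA [EL _] s; rewrite /tree_of.
have E : run o ET [:: code_str s] = nat_of_bool (Tm A (LA A lt) s).
  by rewrite run_ET Tc_code EA EL.
split.
- move/eval_run => /(_ wf_ET); rewrite E; by case: (Tm _ _ s).
- move=> H; have := run_sound o wf_ET (xs := [:: code_str s]); by rewrite E H.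
Qed.

Lemma iso_ext (P P' Q Q' : (nat -> bool) -> Prop) :
  (forall X, P X <-> P' X) -> (forall X, Q X <-> Q' X) ->
  order_iso P lexlt Q lexlt -> order_iso P' lexlt Q' lexlt.
Proof.
move=> EP EQ [f [fP [fS fL]]]; exists f; split; last split.
- by move=> x /EP /fP /EQ.
- by move=> y /EQ /fS [x [Px E]]; exists x; split => //; apply/EP.
- by move=> x y /EP Px /EP Py; apply: fL.
Qed.

Lemma body_ext (T T' : seq bool -> Prop) : (forall s, T s <-> T' s) ->
  forall X, body T X <-> body T' X.
Proof. by move=> E X; split => H n; apply/E. Qed.

Lemma lin_isoE A1 lt1 A2 lt2 :
  lin_iso A1 lt1 A2 lt2 <->
  order_iso (fun a => A1 a) (fun a b => LA A1 lt1 a b) (fun b => A2 b) (fun a b => LA A2 lt2 a b).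
Proof.
split; case=> f [fA [fS fL]]; exists f; split => //; split => // x y Ax Ay;
  move: (fL x y Ax Ay); rewrite /LA Ax Ay (fA _ Ax) (fA _ Ay) //.
Qed.

Theorem lemma4p3 :
  exists eT el : rf,
    (forall (o : nat -> bool) (A : pred nat) (lt : rel nat),
      presents o A lt -> linear_order A lt ->
      exists (T : pred (seq bool)) (l : nat -> seq bool),
        (forall s, eval o eT [:: code_str s] (nat_of_bool (T s))) /\
        (forall a, A a -> eval o el [:: a] (code_str (l a))) /\
        is_tree T /\
        (forall a, A a -> T (l a)) /\
        (forall s, T s ->
           ((s != [::] /\ last true s = false) <-> exists a, A a /\ s = l a)) /\
        (forall a, A a -> body T (ext1 (l a))) /\
        (forall a b, A a -> A b -> (lt a b <-> lexlt (ext1 (l a)) (ext1 (l b)))) /\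
        (forall X, body T X ->
           ((exists a, A a /\ X = ext1 (l a)) <-> has_successor_in (body T) X))) /\
    (forall (o1 : nat -> bool) (A1 : pred nat) (lt1 : rel nat)
            (o2 : nat -> bool) (A2 : pred nat) (lt2 : rel nat),
      presents o1 A1 lt1 -> linear_order A1 lt1 ->
      presents o2 A2 lt2 -> linear_order A2 lt2 ->
      (lin_iso A1 lt1 A2 lt2 ->
         order_iso (body (tree_of eT o1)) lexlt (body (tree_of eT o2)) lexlt) /\
      (lin_iso A1 lt1 A2 lt2 <->
         order_iso (body (tree_of eT o1)) lexlt (body (tree_of eT o2)) lexlt)).
Proof.
exists ET, EL; split.
- move=> o A lt pr lo; case: (setup pr lo) => EA [EL' [a1 [b1 [c1 d1]]]].
  exists (Tm A (LA A lt)), (lab A (LA A lt)).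
  split; last split; last split; last split; last split; last split; last split.
  + move=> s; have := run_sound o wf_ET (xs := [:: code_str s]).
    by rewrite run_ET Tc_code EA EL'.
  + move=> a Aa; have := run_sound o wf_EL (xs := [:: a]).
    by rewrite run_EL EA EL'.
  + exact: tree_Tm.
  + by move=> a Aa; apply: (lab_T a1 b1 c1 d1).
  + by move=> s Ts; apply: (prop1 a1 b1 c1 d1).
  + move=> a Aa; rewrite -(Xc_Ca a1 b1 c1 d1 Aa).
    exact: body_Xc a1 b1 c1 d1 _ (upper_Ca a1 b1 c1 d1 a).
  + move=> a b Aa Ab; rewrite -(prop3 a1 b1 c1 d1 Aa Ab) /LA Aa Ab //.
  + by move=> X bX; apply: (prop4 a1 b1 c1 d1).
- move=> o1 A1 lt1 o2 A2 lt2 pr1 lo1 pr2 lo2.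
  case: (setup pr1 lo1) => _ [_ H1]; case: (setup pr2 lo2) => _ [_ H2].
  have E1 := body_ext (tree_ofE pr1 lo1).
  have E2 := body_ext (tree_ofE pr2 lo2).
  have fwd : lin_iso A1 lt1 A2 lt2 ->
      order_iso (body (tree_of ET o1)) lexlt (body (tree_of ET o2)) lexlt.
    move/lin_isoE => I; apply: (iso_ext (P := body (Tm A1 (LA A1 lt1)))
       (Q := body (Tm A2 (LA A2 lt2)))).
    * by move=> X; rewrite E1.
    * by move=> X; rewrite E2.
    * exact: iso_bodies H1 H2 I.
  split => //; split => // I; apply/lin_isoE; apply: (iso_back H1 H2).
  apply: (iso_ext (P := body (tree_of ET o1)) (Q := body (tree_of ET o2))) I.
  + by move=> X; rewrite E1.
  + by move=> X; rewrite E2.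
Qed.
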